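(* Fix $d\ge4$. Then there are constants $c,C>0$ depending only on $d$ such that for all $n\ge d$, $$c\,\frac{n^{d-1}}{\varphi(n)}\le p_{n,d}\le C\,\frac{n^{d-1}}{\varphi(n)};$$ in particular $p_{n,d}\ge c\,n^{d-2}$.
   Context: The affine group of $\mathbb{Z}_n$ is the group of maps $x\mapsto ax+b$ with $a\in\mathbb{Z}_n^*$, $b\in\mathbb{Z}_n$ (isomorphic to $\mathbb{Z}_n^*\ltimes\mathbb{Z}_n$), acting on $d$-element subsets of $\mathbb{Z}_n$ elementwise. $p_{n,d}$ is the number of orbits of this action on the set of $d$-element subsets of $\mathbb{Z}_n$. $\varphi$ is Euler's totient function. *)

(* Defs.v *)
From mathcomp Require Import all_boot all_order all_algebra.
Set Implicit Arguments. Unset Strict Implicit. Unset Printing Implicit Defensive.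

(* Z_n is modelled as 'I_n with arithmetic mod n (n >= 1 whenever used). *)

Definition affimg (n a b : nat) (A : {set 'I_n}) : {set 'I_n} :=
  [set x : 'I_n | [exists y in A, val x == (a * val y + b) %% n]].

Definition affgrp (n : nat) : {set 'I_n * 'I_n} :=
  [set ab : 'I_n * 'I_n | coprime ab.1 n].

Definition aff_orbit (n : nat) (A : {set 'I_n}) : {set {set 'I_n}} :=
  [set affimg (val ab.1) (val ab.2) A | ab in affgrp n].

Definition dsubsets (n d : nat) : {set {set 'I_n}} :=
  [set A : {set 'I_n} | #|A| == d].

Definition p_nd (n d : nat) : nat :=
  #|[set aff_orbit A | A in dsubsets n d]|.

(* Main.v *)
Require Import Defs.
From mathcomp Require Import all_boot all_order all_algebra all_fingroup.
From mathcomp Require Import zify.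
Set Implicit Arguments. Unset Strict Implicit. Unset Printing Implicit Defensive.

Lemma mod_cancel n a x y : coprime a n -> x < n -> y < n ->
  a * x = a * y %[mod n] -> x = y.
Proof.
wlog le: x y / y <= x.
  move=> H ca xn yn e; case: (leqP y x) => h; first exact: H.
  by symmetry; apply: H => //; apply: ltnW.
move=> ca xn yn /eqP; rewrite eqn_mod_dvd ?leq_mul2l ?le ?orbT //.
rewrite -mulnBr Gauss_dvdr; last by rewrite coprime_sym.
move=> hd; have: x - y < n by lia.
case: (posnP (x - y)) => [h0|hp]; first by lia.
have := dvdn_leq hp hd; lia.
Qed.

Lemma ord_gt0 n (x : 'I_n) : 0 < n.
Proof. exact: leq_ltn_trans (leq0n x) (ltn_ord x). Qed.

Definition affm n a b (x : 'I_n) : 'I_n :=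
  Ordinal (ltn_pmod (a * x + b) (ord_gt0 x)).

Lemma affmE n a b (x : 'I_n) : val (affm a b x) = (a * x + b) %% n.
Proof. by []. Qed.

Lemma affimgE n a b (A : {set 'I_n}) : affimg a b A = affm a b @: A.
Proof.
apply/setP => x; rewrite inE; apply/existsP/imsetP.
  by case=> y /andP[yA /eqP e]; exists y => //; apply: val_inj.
by case=> y yA ->; exists y; rewrite yA /=.
Qed.

Lemma affm_inj n a b : coprime a n -> injective (@affm n a b).
Proof.
move=> ca x y /(congr1 val); rewrite !affmE => /eqP.
rewrite eqn_modDr => /eqP e; apply: val_inj; exact: mod_cancel ca _ _ e.
Qed.

Definition affp n (ab : 'I_n * 'I_n) : {perm 'I_n} :=
  match boolP (coprime ab.1 n) with
  | AltTrue h => perm (@affm_inj n ab.1 ab.2 h)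
  | AltFalse _ => 1%g
  end.

Lemma affpE n (ab : 'I_n * 'I_n) x : coprime ab.1 n -> affp ab x = affm ab.1 ab.2 x.
Proof. move=> h; rewrite /affp; destruct (boolP _) as [h'|h']; first by rewrite permE.
by rewrite h in h'. Qed.

Definition affS n : {set {perm 'I_n}} := (@affp n) @: affgrp n.

Lemma affgrpP n (ab : 'I_n * 'I_n) : (ab \in affgrp n) = coprime ab.1 n.
Proof. by rewrite inE. Qed.

Lemma affS_group n : 1 < n -> group_set (affS n).
Proof.
move=> n1; apply/group_setP; split.
  apply/imsetP; exists (Ordinal n1, Ordinal (ltnW n1)); first by rewrite affgrpP coprime1n.
  apply/permP => x; rewrite affpE ?coprime1n // perm1; apply: val_inj.
  by rewrite affmE /= mul1n addn0 modn_small.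
move=> s t /imsetP[[a b] ca ->] /imsetP[[c e] ce ->].
rewrite affgrpP /= in ca; rewrite affgrpP /= in ce.
have lt1 : c * a %% n < n by rewrite ltn_pmod // ltnW.
have lt2 : (c * b + e) %% n < n by rewrite ltn_pmod // ltnW.
apply/imsetP; exists (Ordinal lt1, Ordinal lt2).
  by rewrite affgrpP /= coprime_modl coprimeMl ca ce.
apply/permP => x; rewrite permM !affpE ?coprime_modl ?coprimeMl ?ca ?ce //=.
apply: val_inj; rewrite !affmE /=.
rewrite -modnDml modnMmr modnDml modnDmr.
rewrite -[in RHS]modnDml modnMml modnDml.
congr (_ %% n); rewrite mulnDr mulnA; lia.
Qed.

Lemma affp_inj n : 1 < n -> {in affgrp n &, injective (@affp n)}.
Proof.
move=> n1 [a b] [c e]; rewrite !affgrpP /= => ca ce h.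
have h0 := congr1 (fun s : {perm 'I_n} => val (s (Ordinal (ltnW n1)))) h.
have h1 := congr1 (fun s : {perm 'I_n} => val (s (Ordinal n1))) h.
rewrite /= !affpE //= in h0 h1.
rewrite !muln0 !add0n !modn_small // in h0.
have be : b = e by apply: val_inj.
subst e; rewrite !muln1 in h1.
have : a = c %[mod n] by apply/eqP; rewrite -(eqn_modDr b) h1.
by rewrite !modn_small // => ac; congr (_, _); apply: val_inj.
Qed.

Definition affG n (n1 : 1 < n) : {group {perm 'I_n}} := Group (affS_group n1).

Lemma setactP n (A : {set 'I_n}) s : ('P^*)%act A s = s @: A.
Proof. by []. Qed.

Lemma orbit_aff n (n1 : 1 < n) (A : {set 'I_n}) :
  orbit ('P^*)%act (affG n1) A = aff_orbit A.
Proof.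
rewrite /orbit /aff_orbit /= /affS -imset_comp; apply: eq_in_imset => ab.
rewrite affgrpP => ca /=; rewrite affimgE; apply: eq_imset => x /=.
by rewrite apermE affpE.
Qed.

Lemma acts_dsub n (n1 : 1 < n) d : [acts affG n1, on dsubsets n d | ('P^*)%act].
Proof.
apply/subsetP => s _; rewrite !inE /=; apply/subsetP => A; rewrite !inE /=.
by rewrite card_imset //; apply: perm_inj.
Qed.

Lemma burnside n (n1 : 1 < n) d :
  \sum_(s in affG n1) #|('Fix_(dsubsets n d | ('P^*)%act)[s])%g| = p_nd n d * (n * totient n).
Proof.
rewrite Frobenius_Cauchy; last exact: acts_dsub.
congr (_ * _).
  rewrite /p_nd; apply: eq_card => O; apply/imsetP/imsetP => -[A hA ->]; exists A => //; by rewrite orbit_aff.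
have -> : #|affG n1| = #|affS n| by [].
rewrite /affS card_in_imset; last exact: affp_inj.
have -> : affgrp n = setX [set a : 'I_n | coprime a n] [set: 'I_n].
  by apply/setP => -[a b]; rewrite !inE andbT.
rewrite cardsX cardsT card_ord mulnC; congr (_ * _).
rewrite totient_count_coprime big_mkord -sum1_card big_mkcond /=.
by apply: eq_bigr => a _; rewrite inE coprime_sym; case: coprime.
Qed.

Lemma sum_by_card (T : finType) (P : pred {set T}) (g : nat -> nat) D :
  (forall A, P A -> #|A| <= D) ->
  \sum_(A | P A) g #|A| = \sum_(k < D.+1) #|[set A | P A && (#|A| == k)]| * g k.
Proof.
move=> hD.
transitivity (\sum_(A | P A) \sum_(k < D.+1) (#|A| == k) * g k).
  apply: eq_bigr => A PA; have h : #|A| < D.+1 by rewrite ltnS hD.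
  rewrite (bigD1 (Ordinal h)) //= eqxx mul1n big1 ?addn0 // => k nk.
  suff -> : (#|A| == k) = false by [].
  by apply/negbTE; apply: contra nk => /eqP e; apply/eqP; apply: val_inj.
rewrite exchange_big; apply: eq_bigr => k _.
rewrite -sum_nat_cond_const big_mkcondr /=; apply: eq_bigr => A _.
by case: ifP; rewrite ?mul1n ?mul0n.
Qed.

Lemma ffact_le_exp f i : f ^_ i <= f ^ i.
Proof.
elim: i => [|i IH]; first by [].
by rewrite ffactnSr expnSr leq_mul // leq_subr.
Qed.

Lemma bin_le_exp f i : 'C(f, i) <= f ^ i.
Proof.
apply: leq_trans (ffact_le_exp f i); rewrite -bin_ffact.
by rewrite leq_pmulr // fact_gt0.
Qed.

Lemma card_small_subsets (T : finType) (F : {set T}) r :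
  #|[set P : {set T} | (P \subset F) && (#|P| <= r)]| <= (#|F|).+1 ^ r.
Proof.
rewrite -sum1dep_card.
rewrite (@sum_by_card T (fun P : {set T} => (P \subset F) && (#|P| <= r)) (fun _ => 1) r); last first.
  by move=> A /andP[].
rewrite -[#|F|.+1]add1n expnDn; apply: leq_sum => k _.
rewrite muln1 exp1n mul1n.
have -> : [set A : {set T} | ((A \subset F) && (#|A| <= r)) && (#|A| == k)] =
          [set A : {set T} | (A \subset F) && (#|A| == k)].
  apply/setP => A; rewrite !inE; case: (A \subset F) => //=.
  by case: eqP => [->|_]; rewrite ?andbF // andbT -ltnS ltn_ord.
rewrite (cards_draws F k); apply: leq_trans (bin_le_exp _ _) _.
by rewrite leq_pmull // bin_gt0 -ltnS ltn_ord.
Qed.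

Lemma card_disjU (T : finType) (X Y : {set T}) :
  (forall x, x \in X -> x \notin Y) -> #|X :|: Y| = #|X| + #|Y|.
Proof.
move=> H; rewrite -cardsUI.
have -> : X :&: Y = set0.
  apply/setP => x; rewrite !inE; case: (boolP (x \in X)) => //= /H /negbTE.
  by [].
by rewrite cards0 addn0.
Qed.

Definition prep (T : finType) (s : {perm T}) (x : T) : T :=
  odflt x [pick y in porbit s x].

Lemma prep_in (T : finType) (s : {perm T}) x : prep s x \in porbit s x.
Proof. by rewrite /prep; case: pickP => [y //|/(_ x)]; rewrite porbit_id. Qed.

Lemma prep_eq (T : finType) (s : {perm T}) x y :
  y \in porbit s x -> prep s y = prep s x.
Proof.
move=> h; have E : porbit s y = porbit s x by apply/eqP; rewrite eq_porbit_mem.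
rewrite /prep E; case: pickP => [z _ //|/(_ x)].
by rewrite porbit_id.
Qed.

Lemma porbit_fix (T : finType) (s : {perm T}) x : s x = x -> porbit s x = [set x].
Proof.
move=> sx; apply/setP => y; rewrite inE; apply/porbitP/eqP => [[i ->] | ->].
  by rewrite permX; elim: i => //= i ->.
by exists 0; rewrite expg0 perm1.
Qed.

Lemma porbit_sub (T : finType) (s : {perm T}) (A : {set T}) x :
  s @: A = A -> x \in A -> porbit s x \subset A.
Proof.
move=> sA xA; apply/subsetP => y /porbitP [i ->]; rewrite permX.
by elim: i => //= i IH; rewrite -sA; apply: imset_f.
Qed.

Lemma fix_count (T : finType) (s : {perm T}) d :
  #|[set A : {set T} | (#|A| == d) && (s @: A == A)]| <=
  \sum_(j < d.+1) 'C(#|T|, j) *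
     ((2 * j <= d) * (#|[set x | s x == x]|.+1) ^ (d - 2 * j)).
Proof.
set F := [set x | s x == x].
pose Q (A : {set T}) := [set x in A | (prep s x == x) && (x \notin F)].
have sxQ : forall A x, x \in Q A -> prep s (s x) = x.
  move=> A x; rewrite inE => /and3P[_ /eqP px _]; rewrite -{2}px; apply: prep_eq.
  by have := mem_porbit s 1 x; rewrite expg1.
have charA : forall A : {set T}, s @: A = A -> forall y,
    (y \in A) = (y \in A :&: F) || [exists x in Q A, y \in porbit s x].
  move=> A sA y; apply/idP/idP.
    move=> yA; case: (boolP (y \in F)) => yF; first by rewrite inE yA yF.
    apply/orP; right; apply/existsP; exists (prep s y).
    have py : prep s y \in porbit s y := prep_in s y.
    rewrite porbit_sym py andbT !inE (subsetP (porbit_sub sA yA)) //=.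
    rewrite (prep_eq py) eqxx /=; apply: contra yF; rewrite !inE => /eqP h.
    move: py; rewrite porbit_sym (porbit_fix h) inE => /eqP ->.
    by apply/eqP.
  case/orP; first by rewrite inE => /andP[].
  case/existsP => x /andP[]; rewrite inE => /andP[xA _].
  by apply: (subsetP (porbit_sub sA xA)).
have boundA : forall A : {set T}, s @: A = A -> #|A :&: F| + 2 * #|Q A| <= #|A|.
  move=> A sA.
  have -> : 2 * #|Q A| = #|Q A| + #|s @: Q A|.
    by rewrite card_imset; [rewrite mul2n addnn | apply: perm_inj].
  rewrite addnA -card_disjU; last first.
    by move=> x; rewrite !inE => /andP[_ ->]; rewrite !andbF.
  rewrite -card_disjU; last first.
    move=> x; rewrite !inE => /orP[/andP[_ xF] | xQ].
      apply/imsetP => -[y yQ exy]; move: (yQ); rewrite !inE => /and3P[_ _ /negP]; apply.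
      by rewrite -(inj_eq (@perm_inj _ s)) -exy.
    apply/imsetP => -[y yQ exy]; move: (xQ) (yQ).
    rewrite !inE => /and3P[_ /eqP px _] /and3P[_ _ /negP]; apply.
    have := sxQ _ _ yQ; rewrite -exy px => xy.
    by apply/eqP.
  apply: subset_leq_card; apply/subsetP => x; rewrite !inE.
  case/orP => [/orP[/andP[] // | /and3P[] //] | /imsetP[y yQ ->]].
  rewrite -sA; apply: imset_f; by move: yQ; rewrite inE => /andP[].
pose phi (A : {set T}) := (A :&: F, Q A).
set X := [set A : {set T} | _].
pose Y := [set PQ : {set T} * {set T} | (PQ.1 \subset F) && (#|PQ.1| + 2 * #|PQ.2| <= d)].
have le1 : #|X| <= #|Y|.
  rewrite -(card_in_imset (f := phi)); last first.
    move=> A B; rewrite !inE => /andP[_ /eqP sA] /andP[_ /eqP sB] [e1 e2].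
    by apply/setP => y; rewrite (charA A sA) (charA B sB) e1 e2.
  apply: subset_leq_card; apply/subsetP => z /imsetP[A hA ->]; move: hA; rewrite inE => /andP[/eqP dA /eqP sA].
  by rewrite inE /= subsetIr -dA boundA.
apply: leq_trans le1 _.
have -> : #|Y| = \sum_(P : {set T}) \sum_(Q0 : {set T})
    ((P \subset F) && (#|P| + 2 * #|Q0| <= d) : nat).
  rewrite pair_bigA /= -sum1_card big_mkcond /=.
  by apply: eq_bigr => -[P Q0] _; rewrite inE /=; case: ifP.
rewrite exchange_big /=.
pose G k := (#|F|.+1) ^ (d - 2 * k).
apply: (@leq_trans (\sum_(Q0 : {set T}) if 2 * #|Q0| <= d then G #|Q0| else 0)).
  apply: leq_sum => Q0 _; case: ifP => h; last first.
    rewrite leqn0; apply/eqP; apply: big1 => P _.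
    suff -> : (#|P| + 2 * #|Q0| <= d) = false by rewrite andbF.
    apply/negbTE; rewrite -ltnNge; apply: leq_trans (leq_addl _ _); by rewrite ltnNge h.
  apply: leq_trans (card_small_subsets F (d - 2 * #|Q0|)).
  rewrite -sum1dep_card [leqRHS]big_mkcond /=; apply: leq_sum => P _.
  by rewrite (leq_subRL _ h) addnC; case: ifP.
rewrite -big_mkcond /=.
rewrite (@sum_by_card T (fun Q0 : {set T} => 2 * #|Q0| <= d) G d); last first.
  by move=> A h; apply: leq_trans h; rewrite leq_pmull.
apply: leq_sum => k _; rewrite mulnA; apply: leq_mul => //.
case: (leqP (2 * k) d) => hk.
  rewrite muln1 -card_draws; apply: subset_leq_card; apply/subsetP => A.
  by rewrite !inE => /andP[].
rewrite muln0 leqn0 cards_eq0; apply/eqP/setP => A; rewrite !inE.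
apply/negbTE; apply/negP => /andP[h /eqP e]; rewrite e in h.
by rewrite leqNgt hk in h.
Qed.

Definition fcnt n a b := #|[set y : 'I_n | (a * y + b) %% n == y]|.

Lemma fcnt_le n a b : fcnt n a b <= n.
Proof. by rewrite /fcnt; apply: leq_trans (max_card _) _; rewrite card_ord. Qed.

Lemma sum_b_fcnt n a : \sum_(b < n) fcnt n a b <= n.
Proof.
rewrite /fcnt; under eq_bigr => b _ do rewrite -sum1dep_card big_mkcond /=.
rewrite exchange_big /=.
rewrite -[n in X in _ <= X]card_ord -sum1_card; apply: leq_sum => y _.
rewrite -big_mkcond /=.
case: (pickP (fun b : 'I_n => (a * y + b) %% n == y)) => [b0 hb0 | none]; last first.
  by rewrite big_pred0.
rewrite (bigD1 b0) // big1 // => b /andP[hb nb].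
move: nb; suff -> : b = b0 by rewrite eqxx.
apply: val_inj.
have : b = b0 %[mod n].
  by apply/eqP; rewrite -(eqn_modDl (a * y)) (eqP hb) (eqP hb0).
by rewrite !modn_small.
Qed.

Lemma cong_aff n a b x y : x = y %[mod n] -> a * x + b = a * y + b %[mod n].
Proof. by move=> e; rewrite -modnDml -modnMmr e modnMmr modnDml. Qed.

Lemma key_fix n a b (x0 y : nat) : x0 < n -> y < n ->
  (a.+1 * x0 + b) %% n = x0 -> (a.+1 * y + b) %% n = y ->
  n %| a * ((y + n - x0) %% n).
Proof.
move=> x0n yn hx hy; set t := (y + n - x0) %% n.
have ht : y = x0 + t %[mod n].
  rewrite /t modnDmr (_ : x0 + (y + n - x0) = y + n); last by lia.
  by rewrite modnDr.
have e1 : a.+1 * (x0 + t) + b = x0 + t %[mod n].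
  by rewrite -(@cong_aff n a.+1 b _ _ ht) hy -ht modn_small.
have e2 : a.+1 * (x0 + t) + b = x0 + a.+1 * t %[mod n].
  rewrite (_ : a.+1 * (x0 + t) + b = (a.+1 * x0 + b) + a.+1 * t); last by rewrite mulnDr; lia.
  by rewrite -modnDml hx.
have e3 : a.+1 * t = t %[mod n].
  by apply/eqP; rewrite -(eqn_modDl x0) -e2 e1.
have e4 : a * t + t = 0 + t %[mod n] by rewrite add0n -e3 mulSn addnC.
by move/eqP: e4; rewrite eqn_modDr mod0n /dvdn => /eqP ->.
Qed.

Lemma fcnt_gcd n a b : fcnt n a b <= gcdn a.-1 n.
Proof.
case: a => [|a] /=; first by rewrite gcd0n fcnt_le.
rewrite /fcnt; set S := [set y : 'I_n | _].
case: (pickP [in S]) => [x0 hx0 | none]; last first.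
  by rewrite (eq_card0 none).
have n0 : 0 < n by apply: leq_ltn_trans (ltn_ord x0).
set g := gcdn a n.
have g0 : 0 < g by rewrite gcdn_gt0 n0 orbT.
set q := n %/ g.
have nqg : q * g = n by rewrite divnK // dvdn_gcdr.
have q0 : 0 < q by rewrite -(ltn_pmul2r g0) mul0n nqg.
pose t (y : 'I_n) := (y + n - x0) %% n.
have tlt : forall y : 'I_n, t y %/ q < g.
  by move=> y; rewrite ltn_divLR // mulnC nqg ltn_mod.
pose h (y : 'I_n) : 'I_g := Ordinal (tlt y).
have hx0' : (a.+1 * x0 + b) %% n = x0 by move: hx0; rewrite inE => /eqP.
have qdiv : forall y, y \in S -> q %| t y.
  move=> y; rewrite inE => /eqP hy.
  have d1 := key_fix (ltn_ord x0) (ltn_ord y) hx0' hy.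
  have d2 : n %| g * t y.
    by rewrite /g muln_gcdl dvdn_gcd d1 dvdn_mulr.
  by rewrite -(dvdn_pmul2r g0) nqg mulnC.
have ty : forall y : 'I_n, (x0 + t y) %% n = y.
  move=> y; rewrite /t modnDmr (_ : x0 + (y + n - x0) = y + n); last first.
    by have := ltn_ord x0; lia.
  by rewrite modnDr modn_small.
rewrite -[g]card_ord; apply: (@leq_card_in _ _ h) => y1 y2 h1 h2 e.
have : t y1 = t y2.
  by rewrite -(divnK (qdiv _ h1)) -(divnK (qdiv _ h2)); move/(congr1 val): e => /= ->.
move=> e'; apply: val_inj => /=; by rewrite -(ty y1) e' ty.
Qed.

Lemma pow_le_lin f M r : f <= M -> f ^ r.+1 <= M ^ r * f.
Proof.
move=> h; rewrite expnSr leq_mul2r; apply/orP; right.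
by elim: r => // r IH; rewrite !expnS leq_mul.
Qed.

Lemma W1 n r : \sum_(a < n) \sum_(b < n) fcnt n a b ^ r <= n ^ r.+1 + n ^ 2.
Proof.
case: r => [|r].
  apply: (@leq_trans (\sum_(a<n) \sum_(b<n) 1)).
    by apply: leq_sum => a _; apply: leq_sum => b _; rewrite expn0.
  rewrite (eq_bigr (fun _ => n)); last by move=> a _; rewrite sum1_card card_ord.
  rewrite sum_nat_const card_ord; lia.
apply: leq_trans (leq_addr _ _).
rewrite expnS -[n in n * _]card_ord -sum_nat_const; apply: leq_sum => a _.
apply: (@leq_trans (\sum_(b < n) n ^ r * fcnt n a b)).
  by apply: leq_sum => b _; apply: pow_le_lin; apply: fcnt_le.
by rewrite -big_distrr /= expnSr leq_mul2l sum_b_fcnt orbT.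
Qed.

Lemma W2 n r : \sum_(a < n) \sum_(b < n) fcnt n a b ^ r.+1 <=
  n * \sum_(a < n) gcdn a.-1 n ^ r.
Proof.
rewrite big_distrr /=; apply: leq_sum => a _.
apply: (@leq_trans (\sum_(b < n) gcdn a.-1 n ^ r * fcnt n a b)).
  by apply: leq_sum => b _; apply: pow_le_lin; apply: fcnt_gcd.
by rewrite -big_distrr /= mulnC leq_mul2r sum_b_fcnt orbT.
Qed.

Lemma tele n N : \sum_(j < N.+2) (1 < j) * (j * (n %/ j) ^ 3) <= n ^ 3.
Proof.
set w := fun j : nat => (1 < j) * (j * (n %/ j) ^ 3).
suff: (\sum_(j < N.+2) w j) * N.+1 <= n ^ 3 * N.
  move=> h; rewrite -(leq_pmul2r (ltn0Sn N)); apply: leq_trans h _.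
  by rewrite leq_mul2l leqnSn orbT.
elim: N => [|N IH].
  by rewrite !big_ord_recr big_ord0 /= /w.
rewrite big_ord_recr /=.
set S := \sum_(j < N.+2) w j.
have hw : w N.+2 * (N.+2 * N.+1) <= n ^ 3.
  rewrite /w /= mul1n.
  apply: (@leq_trans ((N.+2 * (n %/ N.+2)) ^ 3)).
    set m := n %/ N.+2; rewrite expnMn.
    rewrite (_ : N.+2 ^ 3 = N.+2 * (N.+2 * N.+2)); last by rewrite !expnS expn0 muln1.
    rewrite mulnC mulnA leq_mul2r; apply/orP; right; nia.
  by rewrite leq_exp2r // mulnC leq_trunc_div.
rewrite -(leq_pmul2l (ltn0Sn N)); move: IH hw; set X := w N.+2; set Y := n ^ 3.
move=> IH hw; nia.
Qed.

Lemma gcd3 n : 0 < n -> \sum_(u < n | 0 < u) gcdn u n ^ 3 <= 2 * n ^ 3.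
Proof.
move=> n0.
pose k := fun u : 'I_n => n %/ gcdn u n.
have gpos : forall u : 'I_n, 0 < gcdn u n by move=> u; rewrite gcdn_gt0 n0 orbT.
have kg : forall u : 'I_n, k u * gcdn u n = n by move=> u; rewrite divnK // dvdn_gcdr.
have kle : forall u : 'I_n, k u < n.+1 by move=> u; rewrite ltnS leq_div.
have kpos : forall u : 'I_n, 0 < k u.
  by move=> u; rewrite -(ltn_pmul2r (gpos u)) mul0n kg.
have gk : forall u : 'I_n, n %/ k u = gcdn u n.
  by move=> u; rewrite -{1}(kg u) mulKn.
have k2 : forall u : 'I_n, 0 < u -> 1 < k u.
  move=> u u0; case: (ltnP 1 (k u)) => // hk.
  have k1 : k u = 1 by have := kpos u; lia.
  have := kg u; rewrite k1 mul1n => e.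
  have : gcdn u n <= u by apply: dvdn_leq => //; apply: dvdn_gcdl.
  by rewrite e leqNgt ltn_ord.
rewrite (partition_big (fun u : 'I_n => (inord (k u) : 'I_n.+1)) xpredT) //=.
have T := tele n n.-1; rewrite prednK // in T.
apply: leq_trans (leq_mul (leqnn 2) T); rewrite big_distrr /=.
apply: leq_sum => j _.
have hset : forall u : 'I_n, (0 < u) && (inord (k u) == j) -> k u = j /\ gcdn u n = n %/ j.
  move=> u /andP[_ /eqP <-]; rewrite inordK //; split => //; by rewrite gk.
rewrite (eq_bigr (fun _ => (n %/ j) ^ 3)); last by move=> u /hset[_ ->].
rewrite sum_nat_cond_const.
case: (ltnP 1 j) => hj; last first.
  suff -> : [set x : 'I_n | (0 < x) && (inord (k x) == j)] = set0 by rewrite cards0.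
  apply/setP => u; rewrite !inE; apply/negbTE/negP => hu.
  have [e _] := hset u hu; move: hu => /andP[u0 _].
  by have := k2 u u0; rewrite e leqNgt ltnS hj.
rewrite mul1n mulnA leq_mul2r; apply/orP; right.
set q := n %/ j.
pose h (u : 'I_n) : 'I_j.+1 := inord (u %/ q).
apply: (@leq_trans j.+1); last by lia.
rewrite -[j.+1]card_ord; apply: (@leq_card_in _ _ h) => u v; rewrite !inE => hu hv e.
have [eu gu] := hset u hu; have [ev gv] := hset v hv.
have qu : q %| u by rewrite /q -gu dvdn_gcdl.
have qv : q %| v by rewrite /q -gv dvdn_gcdl.
have ltq : forall w : 'I_n, (0 < w) && (inord (k w) == j) -> w %/ q < j.+1.
  move=> w hw; have [ew gw] := hset w hw.
  rewrite ltn_divLR; last by rewrite /q -gw gpos.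
  apply: leq_trans (ltn_ord w) _.
  by rewrite -{1}(kg w) ew gw leq_mul2r leqnSn orbT.
move/(congr1 val): e; rewrite /h /= !inordK ?ltq // => e.
by apply: val_inj; rewrite /= -(divnK qu) -(divnK qv) e.
Qed.

Lemma expn_monoL m k e : m <= k -> m ^ e <= k ^ e.
Proof. by move=> h; elim: e => // e IH; rewrite !expnS leq_mul. Qed.

Lemma L3 n M : 0 < n -> 3 <= M -> \sum_(a < n) gcdn a.-1 n ^ M <= 4 * n ^ M.
Proof.
move=> n0 M3.
have gle : forall u, gcdn u n <= n by move=> u; apply: dvdn_leq => //; apply: dvdn_gcdr.
have hA : \sum_(u < n | 0 < u) gcdn u n ^ M <= 2 * n ^ M.
  rewrite -(subnK M3) expnD mulnA (mulnC 2) -mulnA.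
  apply: (@leq_trans (\sum_(u < n | 0 < u) n ^ (M - 3) * gcdn u n ^ 3)).
    by apply: leq_sum => u _; rewrite expnD leq_mul2r expn_monoL ?orbT.
  by rewrite -big_distrr /= leq_mul2l gcd3 // orbT.
have hB : \sum_(u < n) gcdn u n ^ M <= 3 * n ^ M.
  rewrite (bigD1 (Ordinal n0)) //= gcd0n (mulSn 2) leq_add2l.
  apply: leq_trans hA; rewrite leq_eqVlt; apply/orP; left; apply/eqP.
  by apply: eq_bigl => u; rewrite lt0n; congr (~~ _); apply/eqP/eqP => [->|/val_inj].
case: n n0 gle hA hB => // m _ gle hA hB.
rewrite big_ord_recl /= gcd0n (mulSn 3) leq_add2l.
apply: leq_trans hB; rewrite big_ord_recr /=; apply: leq_trans (leq_addr _ _).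
by rewrite leq_eqVlt; apply/orP; left; apply/eqP; apply: eq_bigr => i _.
Qed.

Lemma fix_card n (ab : 'I_n * 'I_n) d : coprime ab.1 n ->
  #|('Fix_(dsubsets n d | ('P^*)%act)[affp ab])%g| <=
  \sum_(j < d.+1) 'C(n, j) * ((2 * j <= d) * (fcnt n ab.1 ab.2).+1 ^ (d - 2 * j)).
Proof.
move=> ca.
have := fix_count (affp ab) d; rewrite card_ord.
have -> : #|[set x | affp ab x == x]| = fcnt n ab.1 ab.2.
  by apply: eq_card => x; rewrite !inE affpE // -val_eqE affmE.
apply: leq_trans; apply: subset_leq_card; apply/subsetP => A.
by rewrite !inE sub1set inE.
Qed.

Lemma f1 f r : f.+1 ^ r <= 2 ^ r * (f ^ r + 1).
Proof.
case: f => [|f].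
  rewrite exp1n; case: r => [|r]; first by rewrite !expn0.
  by rewrite exp0n // add0n muln1 expn_gt0.
apply: (@leq_trans ((2 * f.+1) ^ r)); first by apply: expn_monoL; lia.
by rewrite expnMn leq_mul2l leq_addr orbT.
Qed.

Lemma Ebound n r : \sum_(a < n) \sum_(b < n) (fcnt n a b).+1 ^ r <=
  2 ^ r * (\sum_(a < n) \sum_(b < n) fcnt n a b ^ r + n * n).
Proof.
apply: (@leq_trans (\sum_(a < n) \sum_(b < n) 2 ^ r * (fcnt n a b ^ r + 1))).
  by apply: leq_sum => a _; apply: leq_sum => b _; apply: f1.
rewrite leq_eqVlt; apply/orP; left; apply/eqP.
rewrite mulnDr big_distrr /= -[n in 2 ^ r * (n * _)]card_ord -sum_nat_const big_distrr /=.
rewrite -big_split /=; apply: eq_bigr => a _.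
rewrite big_distrr /= -[n in 2 ^ r * n]card_ord -sum1_card big_distrr /= -big_split /=.
by apply: eq_bigr => b _; rewrite mulnDr muln1.
Qed.

Lemma perj n d j : 4 <= d -> d <= n -> 2 * j <= d ->
  'C(n, j) * \sum_(a < n) \sum_(b < n) (fcnt n a b).+1 ^ (d - 2 * j) <= 5 * 2 ^ d * n ^ d.
Proof.
move=> d4 dn jd.
have n0 : 0 < n by lia.
have nn : n * n <= n ^ d.
  by rewrite mulnn; apply: leq_pexp2l => //; lia.
case: j jd => [|j] jd.
  rewrite bin0 mul1n muln0 subn0; apply: leq_trans (Ebound n d) _.
  rewrite (mulnC 5) -mulnA leq_mul2l; apply/orP; right.
  have dd : d = d.-1.+1 by lia.
  have h1 : \sum_(a < n) \sum_(b < n) fcnt n a b ^ d <= 4 * n ^ d.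
    rewrite {1}dd; apply: leq_trans (W2 n d.-1) _.
    apply: leq_trans (leq_mul (leqnn n) (L3 n0 (_ : 3 <= d.-1))) _; first by lia.
    by rewrite mulnCA -expnS -dd.
  have -> : 5 * n ^ d = 4 * n ^ d + n ^ d by rewrite (mulSn 4) addnC.
  exact: leq_add h1 nn.
set r := d - 2 * j.+1.
apply: (@leq_trans (n ^ j.+1 * (2 ^ r * (n ^ r.+1 + n ^ 2 + n * n)))).
  apply: leq_mul; first exact: bin_le_exp.
  apply: leq_trans (Ebound n r) _; rewrite leq_mul2l leq_add2r W1 orbT //.
have h2r : 2 ^ r <= 2 ^ d by apply: leq_pexp2l => //; lia.
have e1 : n ^ j.+1 * n ^ r.+1 <= n ^ d by rewrite -expnD; apply: leq_pexp2l => //; lia.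
have e2 : n ^ j.+1 * n ^ 2 <= n ^ d by rewrite -expnD; apply: leq_pexp2l => //; lia.
have e3 : n ^ j.+1 * (n * n) <= n ^ d by rewrite mulnn.
rewrite mulnCA; apply: (@leq_trans (2 ^ d * (n ^ d + n ^ d + n ^ d))).
  apply: leq_mul => //; rewrite !mulnDr; apply: leq_add; first apply: leq_add; by [].
lia.
Qed.

Lemma upper n d (n1 : 1 < n) : 4 <= d -> d <= n ->
  \sum_(s in affG n1) #|('Fix_(dsubsets n d | ('P^*)%act)[s])%g| <= d.+1 * (5 * 2 ^ d * n ^ d).
Proof.
move=> d4 dn.
pose B (f : nat) := \sum_(j < d.+1) 'C(n, j) * ((2 * j <= d) * f.+1 ^ (d - 2 * j)).
have -> : \sum_(s in affG n1) #|('Fix_(dsubsets n d | ('P^*)%act)[s])%g| =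
          \sum_(s in (@affp n) @: affgrp n) #|('Fix_(dsubsets n d | ('P^*)%act)[s])%g| by [].
rewrite big_imset /=; last exact: affp_inj.
apply: (@leq_trans (\sum_(ab in affgrp n) B (fcnt n ab.1 ab.2))).
  by apply: leq_sum => ab; rewrite affgrpP => ca; apply: fix_card.
apply: (@leq_trans (\sum_(ab : 'I_n * 'I_n) B (fcnt n ab.1 ab.2))).
  by rewrite [leqRHS](bigID (mem (affgrp n))) /= leq_addr.
rewrite -(pair_bigA _ (fun a b : 'I_n => B (fcnt n a b))) /= /B.
under eq_bigr => a _ do rewrite exchange_big /=.
rewrite exchange_big /=.
rewrite -[d.+1 in leqRHS]card_ord -sum_nat_const; apply: leq_sum => j _.
under eq_bigr => a _ do rewrite -big_distrr /= -big_distrr /=.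
rewrite -big_distrr /= -big_distrr /= mulnCA.
case: (leqP (2 * j) d) => hj; last by rewrite mul0n.
by rewrite mul1n perj.
Qed.

Lemma lower n d (n1 : 1 < n) :
  'C(n, d) <= \sum_(s in affG n1) #|('Fix_(dsubsets n d | ('P^*)%act)[s])%g|.
Proof.
rewrite (bigD1 1%g) ?group1 //=; apply: leq_trans (leq_addr _ _).
rewrite -[n in 'C(n, _)]card_ord -card_draws; apply: subset_leq_card.
apply/subsetP => A; rewrite !inE => ->; rewrite sub1set inE /=.
by rewrite act1 eqxx.
Qed.

Lemma binlb n d : d <= n -> n ^ d <= d ^ d * 'C(n, d).
Proof.
move=> dn.
have H : forall k, k <= d -> n ^ k * d ^_ k <= d ^ k * n ^_ k.
  elim => [|k IH] hk; first by [].
  rewrite !ffactnSr !expnSr.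
  have := IH (ltnW hk) => ih.
  have sm : n * (d - k) <= d * (n - k) by nia.
  have := leq_mul ih sm.
  set P1 := n ^ k; set Q1 := d ^_ k; set R1 := d ^ k; set S1 := n ^_ k.
  move=> h; apply: leq_trans _ (leq_trans h _); rewrite leq_eqVlt; apply/orP; left; apply/eqP; nia.
have := H d (leqnn d); rewrite ffactnn -bin_ffact mulnA leq_pmul2r ?fact_gt0 //.
Qed.

Lemma tot_le n : totient n <= n.
Proof.
rewrite totient_count_coprime; apply: (@leq_trans (\sum_(0 <= i < n) 1)).
  by apply: leq_sum => i _; apply: leq_b1.
by rewrite sum_nat_const_nat muln1 subn0.
Qed.

Import Order.TTheory GRing.Theory Num.Theory.
Local Open Scope ring_scope.

Theorem theorem8p1 (d : nat) (hd : (4 <= d)%N) :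
  exists c C : rat, 0 < c /\ 0 < C /\
    forall n : nat, (d <= n)%N ->
      c * (n%:R ^+ d.-1 / (totient n)%:R) <= (p_nd n d)%:R /\
      (p_nd n d)%:R <= C * (n%:R ^+ d.-1 / (totient n)%:R) /\
      c * n%:R ^+ (d - 2) <= (p_nd n d)%:R.
Proof.
set K := (d.+1 * (5 * 2 ^ d))%N.
exists ((d ^ d)%:R^-1), K%:R.
have dd0 : (0 < d ^ d)%N by rewrite expn_gt0; apply/orP; left; lia.
have K0 : (0 < K)%N by rewrite /K !muln_gt0 expn_gt0.
split; first by rewrite invr_gt0 ltr0n.
split; first by rewrite ltr0n.
move=> n dn.
have n1 : (1 < n)%N by lia.
have n0 : (0 < n)%N by lia.
set p := p_nd n d.
set P := totient n.
have P0 : (0 < P)%N by rewrite totient_gt0.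
have PL : (P <= n)%N by apply: tot_le.
have hS := burnside n1 d.
have hlow := lower d n1; rewrite hS -/p -/P in hlow.
have hup := upper n1 hd dn; rewrite hS -/p -/P in hup.
have hb := binlb dn.
have ed : d = d.-1.+1 by lia.
have ed2 : d.-1 = (d - 2).+1 by lia.
have N1 : (n ^ d.-1 <= d ^ d * (p * P))%N.
  rewrite -(leq_pmul2l n0) -expnS -ed; apply: leq_trans hb _.
  rewrite mulnCA leq_mul2l; apply/orP; right; apply: leq_trans hlow _.
  by rewrite mulnCA.
have N2 : (p * P <= K * n ^ d.-1)%N.
  rewrite -(leq_pmul2l n0) [X in (_ <= X)%N]mulnCA -expnS -ed /K -!mulnA.
  by move: hup; rewrite mulnCA !mulnA.
have N3 : (n ^ (d - 2) <= d ^ d * p)%N.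
  rewrite -(leq_pmul2l n0) -expnS -ed2; apply: leq_trans N1 _.
  rewrite (mulnC n) -mulnA leq_mul2l; apply/orP; right.
  by rewrite leq_mul2l PL orbT.
have Pr : 0 < P%:R :> rat by rewrite ltr0n.
have dr : 0 < (d ^ d)%:R :> rat by rewrite ltr0n.
split; last split.
- rewrite ler_pdivrMl // ler_pdivrMr // -natrX -!natrM ler_nat.
  by rewrite -mulnA.
- rewrite mulrA ler_pdivlMr // -natrX -!natrM ler_nat.
  exact: N2.
- rewrite ler_pdivrMl // -natrX -!natrM ler_nat.
  exact: N3.
Qed.
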